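(* Let $n,p$ be positive integers, $X\in\mathbb{R}^{n\times p}$, $\mathbf y\in\mathbb{R}^n$, $\delta>0$ and $\lambda>0$. Then \[ \nabla f_\lambda(\mathbf t)=\boldsymbol\zeta_{\mathbf t}+\lambda\mathbf 1,\qquad \mathbf t\in(0,1)^p, \] and, for every $\mathbf w\in\mathbb{R}^p$, with $\mathbf t=\mathbf t(\mathbf w)$, \[ \nabla g_\lambda(\mathbf w)=(\boldsymbol\zeta_{\mathbf t}+\lambda\mathbf 1)\odot\big(2\mathbf w\odot\exp(-\mathbf w\odot\mathbf w)\big), \] where \[ \boldsymbol\zeta_{\mathbf t}=2\big(\widetilde{\boldsymbol\beta}_{\mathbf t}\odot(\mathbf a_{\mathbf t}-\mathbf d_{\mathbf t})\big)-2(\mathbf b_{\mathbf t}\odot\mathbf c_{\mathbf t}), \] with \begin{align*} \mathbf a_{\mathbf t}&=\left(\tfrac{X^\top X}{n}\right)(\mathbf t\odot\widetilde{\boldsymbol\beta}_{\mathbf t})-\tfrac{X^\top\mathbf y}{n},\qquad \mathbf b_{\mathbf t}=\mathbf a_{\mathbf t}-\tfrac{\delta}{n}(\mathbf t\odot\widetilde{\boldsymbol\beta}_{\mathbf t}),\\ \mathbf c_{\mathbf t}&=L_{\mathbf t}^{-1}(\mathbf t\odot\mathbf a_{\mathbf t}),\qquad \mathbf d_{\mathbf t}=\left(\tfrac{X^\top X}{n}-\tfrac{\delta}{n}I\right)(\mathbf t\odot\mathbf c_{\mathbf t}). \end{align*}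
   Context: For $\mathbf t\in[0,1]^p$, $T_{\mathbf t}=\mathrm{Diag}(t_1,\dots,t_p)$, $X_{\mathbf t}=XT_{\mathbf t}$, $L_{\mathbf t}=\frac1n[X_{\mathbf t}^\top X_{\mathbf t}+\delta(I-T_{\mathbf t}^2)]$ with $I$ the $p\times p$ identity, $\widetilde{\boldsymbol\beta}_{\mathbf t}:=L_{\mathbf t}^{+}\left(X_{\mathbf t}^\top\mathbf y/n\right)$ with $L_{\mathbf t}^+$ the Moore–Penrose pseudo-inverse, $f_\lambda(\mathbf t)=\frac1n\|\mathbf y-X_{\mathbf t}\widetilde{\boldsymbol\beta}_{\mathbf t}\|_2^2+\lambda\sum_{j=1}^p t_j$, $\mathbf t(\mathbf w)$ is defined by $t_j(w_j)=1-\exp(-w_j^2)$, and $g_\lambda(\mathbf w)=f_\lambda(\mathbf t(\mathbf w))$. Here $\odot$ is the element-wise product, $\exp$ is applied element-wise, and $\mathbf 1$ is the all-ones vector in $\mathbb{R}^p$. *)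

(* Defs.v *)
From mathcomp Require Import all_boot all_order all_algebra.
From mathcomp Require Import all_classical all_reals all_analysis.
Set Implicit Arguments. Unset Strict Implicit. Unset Printing Implicit Defensive.
Import Order.TTheory GRing.Theory Num.Theory.
Import numFieldNormedType.Exports.
Local Open Scope classical_set_scope.
Local Open Scope ring_scope.

Section Defs.
Variables (R : realType) (n p : nat).
Variables (X : 'M[R]_(n, p)) (y : 'cV[R]_n) (delta lambda : R).

Definition hadam (u v : 'cV[R]_p) : 'cV[R]_p := \col_j (u j 0 * v j 0).

(* Moore--Penrose pseudo-inverse (real case): the unique B with the four
   Penrose equations; it always exists, so xget picks it. *)
Definition is_MPinv (A B : 'M[R]_p) : Prop :=
  [/\ A *m B *m A = A, B *m A *m B = B, (A *m B)^T = A *m B & (B *m A)^T = B *m A].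
Definition MPinv (A : 'M[R]_p) : 'M[R]_p := xget 0 [set B | is_MPinv A B].

Definition Tt (t : 'cV[R]_p) : 'M[R]_p := diag_mx t^T.
Definition Xt (t : 'cV[R]_p) : 'M[R]_(n, p) := X *m Tt t.
Definition Lt (t : 'cV[R]_p) : 'M[R]_p :=
  (n%:R)^-1 *: ((Xt t)^T *m Xt t + delta *: (1%:M - Tt t *m Tt t)).
Definition betat (t : 'cV[R]_p) : 'cV[R]_p :=
  MPinv (Lt t) *m ((n%:R)^-1 *: ((Xt t)^T *m y)).

Definition sqnorm (v : 'cV[R]_n) : R := \sum_i (v i 0) ^+ 2.

Definition f_lam (t : 'cV[R]_p) : R :=
  (n%:R)^-1 * sqnorm (y - Xt t *m betat t) + lambda * \sum_j t j 0.

Definition t_of (w : 'cV[R]_p) : 'cV[R]_p := \col_j (1 - expR (- (w j 0 ^+ 2))).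

Definition g_lam (w : 'cV[R]_p) : R := f_lam (t_of w).

Definition G : 'M[R]_p := (n%:R)^-1 *: (X^T *m X).

Definition a_t (t : 'cV[R]_p) : 'cV[R]_p :=
  G *m hadam t (betat t) - (n%:R)^-1 *: (X^T *m y).
Definition b_t (t : 'cV[R]_p) : 'cV[R]_p :=
  a_t t - (delta / n%:R) *: hadam t (betat t).
Definition c_t (t : 'cV[R]_p) : 'cV[R]_p := invmx (Lt t) *m hadam t (a_t t).
Definition d_t (t : 'cV[R]_p) : 'cV[R]_p :=
  (G - (delta / n%:R) *: 1%:M) *m hadam t (c_t t).

Definition zeta (t : 'cV[R]_p) : 'cV[R]_p :=
  2 *: hadam (betat t) (a_t t - d_t t) - 2 *: hadam (b_t t) (c_t t).

Definition has_gradient (F : 'cV[R]_p -> R) (x gr : 'cV[R]_p) : Prop :=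
  differentiable F x /\ forall h : 'cV[R]_p, 'd F x h = \sum_j gr j 0 * h j 0.

End Defs.

(* Main.v *)
Require Import Defs.
From mathcomp Require Import all_boot all_order all_algebra.
From mathcomp Require Import all_classical all_reals all_analysis.
From mathcomp Require Import ring lra.
Import Order.TTheory GRing.Theory Num.Theory.
Import numFieldNormedType.Exports.
Local Open Scope classical_set_scope.
Local Open Scope ring_scope.
Section Loc.
Context {R : realType} {V W : normedModType R}.

Lemma near_eq_diff (f g : V -> W) x : differentiable g x ->
  (\forall y \near x, f y = g y) -> differentiable f x /\ 'd f x = 'd g x :> (V -> W).
Proof.
move=> dg fg.
have fx : f x = g x := nbhs_singleton fg.
have key : f \o shift x = cst (f x) + 'd g x +o_ 0 id.
  apply/eqaddoP => e e0.
  have H := (eqaddoP _ _ _ _).1 (diff_locally dg) e e0.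
  have fg0 : \forall h \near 0, f (h + x) = g (h + x).
    by move: fg; rewrite (near_shift 0 x); apply: filterS => h /=; rewrite subr0 addrC.
  apply: filterS2 fg0 H => h /= E.
  by rewrite !fctE fx E.
have dd : 'd f x = 'd g x :> (V -> W) := diff_unique (diff_continuous dg) key.
split => //; apply/diff_locallyP; rewrite dd; split => //; exact: diff_continuous.
Qed.
End Loc.
Section Scal.
Context {R : realType} {V : normedModType R}.

Definition sD (f : V -> R) x (f' : V -> R) :=
  differentiable f x /\ forall h, 'd f x h = f' h.

Lemma sD_cst (c : R) x : sD (fun _ => c) x (fun _ => 0).
Proof. split; first exact: differentiable_cst. by move=> h; rewrite diff_cst. Qed.

Lemma sD_add {f g x f' g'} : sD f x f' -> sD g x g' ->
  sD (fun s => f s + g s) x (fun h => f' h + g' h).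
Proof.
move=> [df Hf] [dg Hg]; split; first exact: differentiableD.
by move=> h; have := diffD df dg => /(congr1 (fun F => F h)) /= ->; rewrite Hf Hg.
Qed.

Lemma sD_mul {f g x f' g'} : sD f x f' -> sD g x g' ->
  sD (fun s => f s * g s) x (fun h => f' h * g x + f x * g' h).
Proof.
move=> [df Hf] [dg Hg]; split; first exact: differentiableM.
move=> h; have := diffM df dg => /(congr1 (fun F => F h)) /= ->.
change (f x *: 'd g x h + g x *: 'd f x h = f' h * g x + f x * g' h).
by rewrite Hf Hg /GRing.scale /= addrC (mulrC (g x)).
Qed.

Lemma sD_ext f g x f' : sD f x f' -> f = g -> sD g x f'.
Proof. by move=> H <-. Qed.

Lemma sD_sum (I : Type) (r : seq I) (F : I -> V -> R) F' x :
  (forall i, sD (F i) x (F' i)) ->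
  sD (fun s => \sum_(i <- r) F i s) x (fun h => \sum_(i <- r) F' i h).
Proof.
move=> HF; elim: r => [|a r IH].
  apply: (@sD_ext (fun _ => 0)); last by apply/funext => s; rewrite big_nil.
  by have [d H] := sD_cst 0 x; split => // h; rewrite H big_nil.
have E : (fun s => \sum_(i <- a :: r) F i s) = (fun s => F a s + \sum_(i <- r) F i s).
  by apply/funext => s; rewrite big_cons.
have E' : (fun s => \sum_(i <- a :: r) F' i s) = (fun s => F' a s + \sum_(i <- r) F' i s).
  by apply/funext => s; rewrite big_cons.
rewrite E E'; exact: sD_add (HF a) IH.
Qed.

Lemma sD_diff {f x} : differentiable f x -> sD f x ('d f x).
Proof. by move=> d; split. Qed.

Lemma diff_prod (I : Type) (r : seq I) (F : I -> V -> R) x :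
  (forall i, differentiable (F i) x) ->
  differentiable (fun s => \prod_(i <- r) F i s) x.
Proof.
move=> HF; elim: r => [|a r IH].
  by rewrite (_ : (fun _ => _) = cst 1); [exact: differentiable_cst|apply/funext => s; rewrite big_nil].
rewrite (_ : (fun _ => _) = (fun s => F a s * \prod_(i <- r) F i s)); last by apply/funext => s; rewrite big_cons.
exact ((sD_mul (sD_diff (HF a)) (sD_diff IH)).1).
Qed.

Lemma diff_sum (I : Type) (r : seq I) (F : I -> V -> R) x :
  (forall i, differentiable (F i) x) ->
  differentiable (fun s => \sum_(i <- r) F i s) x.
Proof. by move=> HF; exact ((@sD_sum _ r F (fun i => 'd (F i) x) x (fun i => sD_diff (HF i))).1). Qed.

Lemma sD_scale (c : R) {f x f'} : sD f x f' -> sD (fun s => c * f s) x (fun h => c * f' h).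
Proof.
move=> H; have [d E] := sD_mul (sD_cst c x) H; split => // h.
by rewrite E mul0r add0r.
Qed.

End Scal.

Section Mat.
Context {R : realType} {V : normedModType R}.

Lemma sD_ext2 {f g : V -> R} {x f' g'} : sD f x f' -> f = g -> f' = g' -> sD g x g'.
Proof. by move=> H <- <-. Qed.

Definition MDr {m k} (F : V -> 'M[R]_(m,k)) x (F' : V -> 'M[R]_(m,k)) :=
  forall i j, sD (fun s => F s i j) x (fun h => F' h i j).

Lemma MDr_ext {m k} {F G : V -> 'M[R]_(m,k)} {x F' G'} :
  MDr F x F' -> F = G -> F' = G' -> MDr G x G'.
Proof. by move=> H <- <-. Qed.

Lemma MDr_cst {m k} (A : 'M[R]_(m,k)) x : MDr (fun _ => A) x (fun _ => 0).
Proof.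
move=> i j; apply: (sD_ext2 (sD_cst (A i j) x)) => //.
by apply/funext => h; rewrite mxE.
Qed.

Lemma MDr_add {m k} {F G : V -> 'M[R]_(m,k)} {x F' G'} :
  MDr F x F' -> MDr G x G' -> MDr (fun s => F s + G s) x (fun h => F' h + G' h).
Proof.
move=> HF HG i j; apply: (sD_ext2 (sD_add (HF i j) (HG i j)));
  by apply/funext => h; rewrite mxE.
Qed.

Lemma MDr_scale {m k} (c : R) {F : V -> 'M[R]_(m,k)} {x F'} :
  MDr F x F' -> MDr (fun s => c *: F s) x (fun h => c *: F' h).
Proof.
move=> HF i j; apply: (sD_ext2 (sD_scale c (HF i j)));
  by apply/funext => h; rewrite mxE.
Qed.

Lemma MDr_opp {m k} {F : V -> 'M[R]_(m,k)} {x F'} :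
  MDr F x F' -> MDr (fun s => - F s) x (fun h => - F' h).
Proof.
move=> HF; apply: (MDr_ext (MDr_scale (-1) HF));
  by apply/funext => h; rewrite scaleN1r.
Qed.

Lemma MDr_sub {m k} {F G : V -> 'M[R]_(m,k)} {x F' G'} :
  MDr F x F' -> MDr G x G' -> MDr (fun s => F s - G s) x (fun h => F' h - G' h).
Proof. by move=> HF HG; exact: (MDr_add HF (MDr_opp HG)). Qed.

Lemma MDr_mul {m k l} {F : V -> 'M[R]_(m,k)} {G : V -> 'M[R]_(k,l)} {x F' G'} :
  MDr F x F' -> MDr G x G' ->
  MDr (fun s => F s *m G s) x (fun h => F' h *m G x + F x *m G' h).
Proof.
move=> HF HG i j.
apply: (sD_ext2 (@sD_sum _ _ _ (index_enum 'I_k) (fun a s => F s i a * G s a j)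
  (fun a h => F' h i a * G x a j + F x i a * G' h a j) x (fun a => sD_mul (HF i a) (HG a j)))).
  by apply/funext => s; rewrite mxE.
by apply/funext => h; rewrite !mxE -big_split.
Qed.

Lemma MDr_tr {m k} {F : V -> 'M[R]_(m,k)} {x F'} :
  MDr F x F' -> MDr (fun s => (F s)^T) x (fun h => (F' h)^T).
Proof.
move=> HF i j; apply: (sD_ext2 (HF j i)); by apply/funext => h; rewrite mxE.
Qed.

Lemma MDr_diag {m} {d : V -> 'cV[R]_m} {x d'} :
  MDr d x d' -> MDr (fun s => diag_mx (d s)^T) x (fun h => diag_mx (d' h)^T).
Proof.
move=> Hd i j; have [->|nij] := eqVneq i j.
  apply: (sD_ext2 (Hd j 0)); by apply/funext => h; rewrite !mxE eqxx mulr1n.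
apply: (sD_ext2 (sD_cst 0 x)); by apply/funext => h; rewrite !mxE (negPf nij) mulr0n.
Qed.

Lemma MDr_near {m k} {F G : V -> 'M[R]_(m,k)} {x G'} :
  MDr G x G' -> (\forall s \near x, F s = G s) -> MDr F x G'.
Proof.
move=> HG FG i j; have [dG EG] := HG i j.
have [dF EF] := @near_eq_diff _ _ _ (fun s => F s i j) (fun s => G s i j) x dG (filterS (fun s (E : F s = G s) => congr1 (fun M : 'M[R]_(m,k) => M i j) E) FG).
split => // h; by rewrite EF.
Qed.

Definition MDd {m k} (F : V -> 'M[R]_(m,k)) x :=
  forall i j, differentiable (fun s => F s i j) x.

Lemma MDr_MDd {m k} {F : V -> 'M[R]_(m,k)} {x F'} : MDr F x F' -> MDd F x.
Proof. by move=> H i j; case: (H i j). Qed.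

Lemma det_diff {m} {M : V -> 'M[R]_m} {x} : MDd M x ->
  differentiable (fun s => \det (M s)) x.
Proof.
move=> HM; rewrite /determinant.
apply: diff_sum => sg.
exact ((sD_mul (sD_cst _ x) (sD_diff (@diff_prod _ _ _ (index_enum 'I_m) (fun i s => M s i (perm.fun_of_perm sg i)) x (fun i => HM i (perm.fun_of_perm sg i))))).1).
Qed.

Lemma unit_near {m} {M : V -> 'M[R]_m} {x} : MDd M x -> M x \in unitmx ->
  \forall s \near x, M s \in unitmx.
Proof.
move=> HM Mu.
have c := differentiable_continuous (det_diff HM).
rewrite unitmxE unitfE in Mu; have := @cvgr_neq0 _ _ _ _ _ _ _ c Mu.
move=> H; near=> s; rewrite unitmxE unitfE; near: s; exact: H.
Unshelve. all: by end_near.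
Qed.


Lemma MDr_inv {m} {L : V -> 'M[R]_m} {x L'} : MDr L x L' -> L x \in unitmx ->
  MDr (fun s => invmx (L s)) x (fun h => - (invmx (L x) *m L' h *m invmx (L x))).
Proof.
move=> HL Lu.
have HLd := MDr_MDd HL.
have U := unit_near HLd Lu.
have Cr : MDd (fun s => invmx (L s)) x.
  move=> i j.
  have dA : differentiable (fun s => \adj (L s) i j) x.
    have -> : (fun s => \adj (L s) i j) =
              (fun s => (-1) ^+ (j + i) * \det (row' j (col' i (L s)))).
      by apply/funext => s; rewrite mxE.
    have HM' : MDd (fun s => row' j (col' i (L s))) x.
      move=> a b.
      have -> : (fun s => row' j (col' i (L s)) a b) = (fun s => L s (lift j a) (lift i b)).
        by apply/funext => s; rewrite !mxE.
      exact: HLd.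
    exact ((sD_mul (sD_cst _ x) (sD_diff (det_diff HM'))).1).
  have dD : differentiable (fun s => (\det (L s))^-1) x.
    apply: differentiableV; first exact: det_diff.
    by rewrite -unitfE -unitmxE.
  have dC : differentiable (fun s => (\det (L s))^-1 * \adj (L s) i j) x.
    exact ((sD_mul (sD_diff dD) (sD_diff dA)).1).
  have NE : \forall s \near x, invmx (L s) i j = (\det (L s))^-1 * \adj (L s) i j.
    near=> s; rewrite /invmx.
    have -> : L s \in unitmx by near: s; exact: U.
    by rewrite mxE.
  exact ((@near_eq_diff _ _ _ (fun s => invmx (L s) i j) _ x dC NE).1).
set D := fun h => \matrix_(i,j) 'd (fun s => invmx (L s) i j) x h.
have HI : MDr (fun s => invmx (L s)) x D.
  by move=> i j; split; [exact: Cr | move=> h; rewrite mxE].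
have HP := MDr_mul HL HI.
have HP1 : MDr (fun s => L s *m invmx (L s)) x (fun _ => 0).
  apply: (MDr_near (MDr_cst 1%:M x)).
  near=> s; apply: mulmxV; near: s; exact: U.
have E h : L' h *m invmx (L x) + L x *m D h = 0.
  apply/matrixP => i j.
  by rewrite -(HP i j).2 (HP1 i j).2 mxE.
apply: (MDr_ext HI) => //; apply/funext => h.
have E2 : L x *m D h = - (L' h *m invmx (L x)).
  by apply/eqP; rewrite -addr_eq0 addrC E.
by rewrite -(mulKmx Lu (D h)) E2 mulmxN mulmxA.
Unshelve. all: by end_near.
Qed.

End Mat.

Section Dot.
Context {R : realType}.

Definition dot {m} (u v : 'cV[R]_m) : R := \sum_j u j 0 * v j 0.

Lemma dotE {m} (u v : 'cV[R]_m) : (u^T *m v) 0 0 = dot u v.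
Proof. by rewrite mxE; apply: eq_bigr => j _; rewrite mxE. Qed.

Lemma dotC {m} (u v : 'cV[R]_m) : dot u v = dot v u.
Proof. by apply: eq_bigr => j _; rewrite mulrC. Qed.

Lemma dotDl {m} (u v w : 'cV[R]_m) : dot (u + v) w = dot u w + dot v w.
Proof. by rewrite /dot -big_split; apply: eq_bigr => j _; rewrite mxE mulrDl. Qed.

Lemma dotDr {m} (u v w : 'cV[R]_m) : dot w (u + v) = dot w u + dot w v.
Proof. by rewrite dotC dotDl !(dotC w). Qed.

Lemma dotZl {m} (c : R) (u w : 'cV[R]_m) : dot (c *: u) w = c * dot u w.
Proof. by rewrite /dot mulr_sumr; apply: eq_bigr => j _; rewrite mxE mulrA. Qed.

Lemma dotZr {m} (c : R) (u w : 'cV[R]_m) : dot w (c *: u) = c * dot w u.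
Proof. by rewrite dotC dotZl dotC. Qed.

Lemma dotNl {m} (u w : 'cV[R]_m) : dot (- u) w = - dot u w.
Proof. by rewrite -scaleN1r dotZl mulN1r. Qed.

Lemma dotNr {m} (u w : 'cV[R]_m) : dot w (- u) = - dot w u.
Proof. by rewrite dotC dotNl dotC. Qed.

Lemma dotBl {m} (u v w : 'cV[R]_m) : dot (u - v) w = dot u w - dot v w.
Proof. by rewrite dotDl dotNl. Qed.

Lemma dotBr {m} (u v w : 'cV[R]_m) : dot w (u - v) = dot w u - dot w v.
Proof. by rewrite dotDr dotNr. Qed.

Lemma dot0r {m} (w : 'cV[R]_m) : dot w 0 = 0.
Proof. by rewrite /dot big1 // => j _; rewrite mxE mulr0. Qed.

Lemma dot0l {m} (w : 'cV[R]_m) : dot 0 w = 0.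
Proof. by rewrite dotC dot0r. Qed.

Lemma dotMl {m k} (A : 'M[R]_(m,k)) (u : 'cV[R]_k) (v : 'cV[R]_m) :
  dot (A *m u) v = dot u (A^T *m v).
Proof. by rewrite -!dotE trmx_mul mulmxA. Qed.

Lemma dotMr {m k} (A : 'M[R]_(m,k)) (u : 'cV[R]_k) (v : 'cV[R]_m) :
  dot v (A *m u) = dot (A^T *m v) u.
Proof. by rewrite dotC dotMl dotC. Qed.

Lemma dot_ge0 {m} (u : 'cV[R]_m) : 0 <= dot u u.
Proof. by apply: sumr_ge0 => j _; rewrite -expr2 sqr_ge0. Qed.

Definition cvdiag {m} (u : 'cV[R]_m) : 'M[R]_m := diag_mx u^T.

Lemma cvdiag_tr {m} (u : 'cV[R]_m) : (cvdiag u)^T = cvdiag u.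
Proof. exact: tr_diag_mx. Qed.

Lemma cvdiagC {m} (u v : 'cV[R]_m) : cvdiag u *m v = cvdiag v *m u.
Proof. by apply/matrixP => i j; rewrite !mul_diag_mx !mxE (ord1 j) mulrC. Qed.

Lemma IBTT_entry {m} (t w : 'cV[R]_m) i :
  ((1%:M - diag_mx t^T *m diag_mx t^T) *m w) i 0 = (1 - t i 0 ^+ 2) * w i 0.
Proof.
rewrite mulmxBl mul1mx -mulmxA !mul_diag_mx !mxE expr2; ring.
Qed.

Lemma hadamE {m} (u v : 'cV[R]_m) : hadam u v = diag_mx u^T *m v.
Proof. by apply/matrixP => i j; rewrite mul_diag_mx !mxE (ord1 j). Qed.

Lemma hadam_dot {m} (u v k : 'cV[R]_m) : dot (hadam u v) k = dot v (diag_mx k^T *m u).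
Proof.
by apply: eq_bigr => j _; rewrite mul_diag_mx !mxE; ring.
Qed.

Lemma entry_form {m m'} (r r' : 'cV[R]_m) (k : 'cV[R]_m') (c lam : R) :
  (c *: (r'^T *m r + r^T *m r') + lam *: (const_mx 1 *m k)) 0 0 =
  c * (dot r' r + dot r r') + lam * dot (const_mx 1) k.
Proof.
rewrite !mxE -!dotE; congr (_ * (_ + _) + _ * _);
  [by rewrite mxE | by rewrite mxE | by rewrite mxE; apply: eq_bigr => j _; rewrite !mxE].
Qed.

End Dot.

Section Main.
Variables (R : realType) (n p : nat) (X : 'M[R]_(n, p)) (y : 'cV[R]_n) (delta lambda : R).

Lemma MPinvE (A : 'M[R]_p) : A \in unitmx -> MPinv A = invmx A.
Proof.
move=> Au; rewrite /MPinv.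
have P : is_MPinv A (invmx A).
  by split; [rewrite mulmxV // mul1mx | rewrite mulVmx // mul1mx | rewrite mulmxV // trmx1 | rewrite mulVmx // trmx1].
have [E _ _ _] : is_MPinv A (xget 0 [set B | is_MPinv A B]).
  by apply: xgetPex; exists (invmx A).
set B := xget _ _ in E *.
transitivity (invmx A *m (A *m B *m A) *m invmx A).
  by rewrite !mulmxA mulVmx // mul1mx -mulmxA mulmxV // mulmx1.
by rewrite E mulVmx // mul1mx.
Qed.

Lemma Lt_unit (t : 'cV[R]_p) : (0 < n)%N -> 0 < delta ->
  (forall j, t j 0 ^+ 2 < 1) -> Lt X delta t \in unitmx.
Proof.
move=> n0 d0 tj; rewrite unitmxE unitfE; apply/negP => /det0P [v v0 vL].
set w := v^T.
have w0 : w != 0 by apply: contraNneq v0 => /(congr1 trmx); rewrite trmxK trmx0 => ->.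
have : dot w (Lt X delta t *m w) = 0.
  by rewrite -dotE /w trmxK mulmxA vL mul0mx mxE.
rewrite /Lt -scalemxAl dotZr mulmxDl dotDr -mulmxA dotMr trmxK -scalemxAl dotZr.
have [j wj] : exists j, w j 0 != 0.
  case: (pselect (exists j, w j 0 != 0)) => [H|nH]; first exact: H.
  suff: w == 0 by rewrite (negPf w0).
  apply/eqP/matrixP => i k; rewrite (ord1 k) [RHS]mxE.
  by case: (eqVneq (w i 0) 0) => // Hi; case: nH; exists i.
have pos : 0 < dot w ((1%:M - Tt t *m Tt t) *m w).
  rewrite /dot (bigD1 j) //= ltr_pwDl //.
    rewrite /Tt IBTT_entry.
    by rewrite mulrCA -expr2 mulr_gt0 ?subr_gt0 // exprn_even_gt0.
  apply: sumr_ge0 => i _.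
  rewrite /Tt IBTT_entry.
  by rewrite mulrCA -expr2 mulr_ge0 ?sqr_ge0 // subr_ge0 ltW.
move/eqP; rewrite mulf_eq0 invr_eq0 pnatr_eq0 (gtn_eqF n0) /=.
rewrite paddr_eq0 ?dot_ge0 ?mulr_ge0 ?ltW // mulf_eq0 (gt_eqF d0) (gt_eqF pos).
by rewrite andbF.
Qed.

Lemma MDr_coord (x : 'cV[R]_p) : MDr (fun s : 'cV[R]_p => s) x (fun h => h).
Proof.
move=> i j; split; first exact: differentiable_coord.
move=> h; rewrite -deriveE; last exact: differentiable_coord.
have D : derivable (fun s : 'cV[R]_p => s) x h by apply: derivable_id.
have := derive_mx D => /(congr1 (fun M : 'cV[R]_p => M i j)); rewrite mxE => <-.
have E : 'D_h (fun s : 'cV[R]_p => s) x = h := derive_id x h.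
by rewrite E.
Qed.

Lemma sD_expR {g : 'cV[R]_p -> R} {x g'} : sD g x g' ->
  sD (fun s => expR (g s)) x (fun h => expR (g x) * g' h).
Proof.
move=> [dg Hg].
have de : differentiable (@expR R) (g x) by apply/derivable1_diffP; exact: derivable_expR.
split; first exact (differentiable_comp dg de).
move=> h.
have := diff_comp dg de => /(congr1 (fun F => F h)) /= ->.
rewrite deriv1E; last exact: derivable_expR.
rewrite /= derive1E Hg mulrC.
have := @derive_expR R => /(congr1 (fun F => F (g x))) /= ->.
by [].
Qed.

Lemma MDr_tof (w : 'cV[R]_p) : MDr (fun s => t_of s) w
  (fun h => \col_j (2 * w j 0 * expR (- (w j 0 ^+ 2)) * h j 0)).
Proof.
move=> i j.
have c := MDr_coord w i 0.
have H := sD_add (sD_cst 1 w) (sD_scale (-1) (sD_expR (sD_scale (-1) (sD_mul c c)))).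
apply: (sD_ext2 H).
  by apply/funext => s; rewrite !mxE expr2 !mulN1r.
by apply/funext => h; rewrite !mxE expr2 !mulN1r; ring.
Qed.

End Main.

Section Main2.
Variables (R : realType) (n p : nat) (X : 'M[R]_(n, p)) (y : 'cV[R]_n) (delta lambda : R).
Definition cvd (t : 'cV[R]_p) : 'M[R]_p := diag_mx t^T.
Definition Inv (t : 'cV[R]_p) := invmx (Lt X delta t).
Definition Uv (t : 'cV[R]_p) := n%:R^-1 *: ((X *m cvd t)^T *m y).
Definition bet t := Inv t *m Uv t.
Definition rr t := y - X *m cvd t *m bet t.
Definition Lp t k := n%:R^-1 *: ((X *m cvd k)^T *m (X *m cvd t) + (X *m cvd t)^T *m (X *m cvd k)
   + delta *: (- (cvd k *m cvd t + cvd t *m cvd k))).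
Definition rr' t k := - (X *m cvd k *m bet t + X *m cvd t *m
   (- (Inv t *m Lp t k *m Inv t) *m Uv t + Inv t *m (n%:R^-1 *: ((X *m cvd k)^T *m y)))).

Lemma alg (t k : 'cV[R]_p) : (0 < n)%N -> Lt X delta t \in unitmx ->
  n%:R^-1 * (dot (rr' t k) (rr t) + dot (rr t) (rr' t k)) = dot (zeta X y delta t) k.
Proof.
move=> n0 Lu.
set nu := n%:R^-1 : R.
set T := cvd t; set K := cvd k.
set q := nu *: (X^T *m y).
set Gm := G X.
set b := bet t.
have TT : T^T = T by exact: tr_diag_mx.
have KT : K^T = K by exact: tr_diag_mx.
have GT : Gm^T = Gm by rewrite /Gm /G linearZ /= trmx_mul trmxK.
have Lsym : (Lt X delta t)^T = Lt X delta t.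
  rewrite /Lt /Xt /Tt linearZ /= linearD /= linearZ /= linearB /= trmx1 !trmx_mul !trmxK !tr_diag_mx.
  by rewrite mulmxA.
have IT : (Inv t)^T = Inv t by rewrite /Inv trmx_inv Lsym.
have bE : betat X y delta t = b by rewrite /betat MPinvE.
set a := a_t X y delta t.
have aE : a = Gm *m (T *m b) - q by rewrite /a /a_t bE hadamE.
set c := c_t X y delta t.
have cE : c = Inv t *m (T *m a) by rewrite /c /c_t hadamE.
have UE : Uv t = T *m q by rewrite /Uv trmx_mul TT -mulmxA scalemxAr.
have hXr v : nu * dot (rr t) (X *m v) = - dot a v.
  rewrite dotMr -dotZl -dotNl; congr dot.
  rewrite aE /rr /Gm /G mulmxBr scalerBr opprB -/b -!mulmxA.
  by rewrite -scalemxAl -mulmxA.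
have hc v : dot (T *m a) (Inv t *m v) = dot c v by rewrite dotMr IT cE.
have hK : nu *: ((X *m K)^T *m y) = K *m q by rewrite trmx_mul KT -mulmxA scalemxAr.
have hLb : Lp t k *m b = K *m (Gm *m (T *m b)) + T *m (Gm *m (K *m b))
     - (delta * nu) *: (K *m (T *m b) + T *m (K *m b)).
  rewrite /Lp -/T -/K -scalemxAl !mulmxDl !trmx_mul KT TT /Gm /G.
  rewrite -[(delta *: _) *m b]scalemxAl mulNmx mulmxDl.
  rewrite -!scalemxAl -!scalemxAr !mulmxA !scalerDr !scalerN !scalerA (mulrC nu).
  by rewrite scalerDr.
have BE : - (Inv t *m Lp t k *m Inv t) *m Uv t + Inv t *m (nu *: ((X *m K)^T *m y))
    = Inv t *m (K *m q - Lp t k *m b).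
  by rewrite hK mulNmx -!mulmxA mulmxBr addrC.
have D1 : nu * dot (rr t) (rr' t k) = dot a (K *m b) + dot (T *m a) (Inv t *m (K *m q - Lp t k *m b)).
  rewrite /rr' -/T -/K -/b BE dotNr dotDr mulrN mulrDr -!mulmxA !hXr opprD !opprK.
  by rewrite [dot a (T *m _)]dotMr TT.
set sd := delta / n%:R.
have sdE : sd = delta * nu by [].
have D2 : dot (T *m a) (Inv t *m (K *m q - Lp t k *m b)) =
   dot c (K *m q) - (dot c (K *m (Gm *m (T *m b))) + dot c (T *m (Gm *m (K *m b)))
      - delta * nu * (dot c (K *m (T *m b)) + dot c (T *m (K *m b)))).
  by rewrite hc hLb dotBr !dotDr dotNr dotZr dotDr.
have Rd : dot (d_t X y delta t) (K *m b) =
   dot c (T *m (Gm *m (K *m b))) - sd * dot c (T *m (K *m b)).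
  have GsT : (Gm - sd *: (1%:M : 'M[R]_p))^T = Gm - sd *: 1%:M by rewrite linearB /= GT scalemx1 tr_scalar_mx.
  rewrite /d_t hadamE -/c -/Gm -/sd -/T dotMl GsT.
  rewrite mulmxBl -[(sd *: _) *m _]scalemxAl mul1mx dotBr dotZr.
  by rewrite !dotMl tr_diag_mx.
have Rb : dot c (K *m b_t X y delta t) =
   dot c (K *m (Gm *m (T *m b))) - dot c (K *m q) - sd * dot c (K *m (T *m b)).
  by rewrite /b_t -/a hadamE bE -/sd -/T aE !mulmxBr dotBr dotBr -[K *m (sd *: _)]scalemxAr dotZr.
have LHS2 : nu * (dot (rr' t k) (rr t) + dot (rr t) (rr' t k)) =
   2 * (nu * dot (rr t) (rr' t k)) by rewrite (dotC (rr' t k)); ring.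
have RHS : dot (zeta X y delta t) k =
   2 * (dot a (K *m b) - dot (d_t X y delta t) (K *m b)) - 2 * dot c (K *m b_t X y delta t).
  rewrite /zeta dotBl !dotZl !hadam_dot bE.
  change (diag_mx k^T) with K.
  by rewrite dotBl.
rewrite LHS2 D1 D2 RHS Rd Rb sdE.
ring.
Qed.

Lemma core (tau : 'cV[R]_p -> 'cV[R]_p) w tau' : (0 < n)%N ->
  MDr tau w tau' -> Lt X delta (tau w) \in unitmx ->
  differentiable (fun s => f_lam X y delta lambda (tau s)) w /\
  forall h, 'd (fun s => f_lam X y delta lambda (tau s)) w h =
    dot (zeta X y delta (tau w) + lambda *: const_mx 1) (tau' h).
Proof.
move=> n0 Ht Lu.
have HT := MDr_diag Ht.
have HX := MDr_mul (MDr_cst X w) HT.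
have HL := MDr_scale n%:R^-1 (MDr_add (MDr_mul (MDr_tr HX) HX)
   (MDr_scale delta (MDr_sub (MDr_cst 1%:M w) (MDr_mul HT HT)))).
have HI := MDr_inv HL Lu.
have HU := MDr_scale n%:R^-1 (MDr_mul (MDr_tr HX) (MDr_cst y w)).
have HB := MDr_mul HI HU.
have Hr := MDr_sub (MDr_cst y w) (MDr_mul HX HB).
have HF := MDr_add (MDr_scale n%:R^-1 (MDr_mul (MDr_tr Hr) Hr))
   (MDr_scale lambda (MDr_mul (MDr_cst (const_mx 1 : 'rV[R]_p) w) Ht)).
have [dF EF] := HF 0 0.
have U := unit_near (MDr_MDd HL) Lu.
have NE : \forall s \near w, f_lam X y delta lambda (tau s) =
   (n%:R^-1 *: ((y - X *m diag_mx (tau s)^T *m (invmx (Lt X delta (tau s)) *m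
      (n%:R^-1 *: ((X *m diag_mx (tau s)^T)^T *m y))))^T *m
      (y - X *m diag_mx (tau s)^T *m (invmx (Lt X delta (tau s)) *m
      (n%:R^-1 *: ((X *m diag_mx (tau s)^T)^T *m y))))) +
    lambda *: (const_mx 1 *m tau s)) 0 0.
  near=> s.
  rewrite /f_lam /betat MPinvE; last by near: s; exact: U.
  rewrite [RHS]mxE [in RHS]mxE dotE [in RHS]mxE /sqnorm /dot /Xt /Tt.
  congr (_ * _ + _ * _).
  by rewrite mxE; apply: eq_bigr => i _; rewrite mxE mul1r.
have [dfl Efl] := @near_eq_diff _ _ _ _ _ w dF NE.
split => // h.
rewrite Efl EF /=.
rewrite !mul0mx !add0r !mulmx0 !addr0 entry_form [in RHS]dotDl [in RHS]dotZl.
congr (_ + _).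
exact (alg (tau w) (tau' h) n0 Lu).
Unshelve. all: by end_near.
Qed.

End Main2.

Theorem theorem4 (R : realType) (n p : nat) (X : 'M[R]_(n, p)) (y : 'cV[R]_n)
    (delta lambda : R) :
  (0 < n)%N -> (0 < p)%N -> 0 < delta -> 0 < lambda ->
  (forall t : 'cV[R]_p, (forall j, 0 < t j 0 < 1) ->
     has_gradient (f_lam X y delta lambda) t
       (zeta X y delta t + lambda *: const_mx 1)) /\
  (forall w : 'cV[R]_p,
     has_gradient (g_lam X y delta lambda) w
       (hadam (zeta X y delta (t_of w) + lambda *: const_mx 1)
              (hadam (2 *: w) (\col_j expR (- (w j 0 * w j 0)))))).

Proof.
move=> n0 p0 d0 l0; split.
- move=> t tH.
  have Lu : Lt X delta t \in unitmx.
    apply: Lt_unit => // j; have /andP[h0 h1] := tH j.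
    rewrite expr2; nra.
  have Hc : MDr (fun s : 'cV[R]_p => s) t (fun h => h) by apply: MDr_coord.
  have [d E] := @core R n p X y delta lambda (fun s => s) t (fun h => h) n0 Hc Lu.
  split; first exact d.
  have E' : forall h, 'd (f_lam X y delta lambda) t h =
     dot (zeta X y delta t + lambda *: const_mx 1) h by exact E.
  by move=> h; rewrite E'.
- move=> w.
  have Lu : Lt X delta (t_of w) \in unitmx.
    apply: Lt_unit => // j.
    have e0 := expR_gt0 (- (w j 0 ^+ 2)).
    have e1 : expR (- (w j 0 ^+ 2)) <= 1 by rewrite expR_le1 oppr_le0 sqr_ge0.
    rewrite mxE expr2; nra.
  have Ht : MDr (fun s => t_of s) w
     (fun h => \col_j (2 * w j 0 * expR (- (w j 0 ^+ 2)) * h j 0)) by apply: MDr_tof.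
  have [d E] := @core R n p X y delta lambda (fun s => t_of s) w _ n0 Ht Lu.
  split; first exact d.
  have E' : forall h, 'd (g_lam X y delta lambda) w h =
     dot (zeta X y delta (t_of w) + lambda *: const_mx 1)
       (\col_j (2 * w j 0 * expR (- (w j 0 ^+ 2)) * h j 0)) by exact E.
  move=> h; rewrite E' /dot; apply: eq_bigr => j _.
  rewrite !mxE expr2; ring.
Qed.
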